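(* Let $Y$ be a finite set. The map sending a diversity $\delta$ on $Y$ to the distance $d_\delta$ on $\mathcal{P}_{\neq\emptyset}(Y)$ is injective.
   Context: $\mathcal{P}_{\neq\emptyset}(Y)$ is the set of non-empty subsets of $Y$. A diversity on $Y$ is $\delta:\mathcal{P}(Y)\to\mathbb{R}$ with (D1) $\delta(A\cup B)+\delta(B\cup C)\ge\delta(A\cup C)$ for all $A,C\subseteq Y$ and non-empty $B\subseteq Y$, and (D2) $\delta(A)=0$ whenever $|A|\le1$. For $A,B\in\mathcal{P}_{\neq\emptyset}(Y)$: $d_\delta(A,B)=\max(0,\delta(A\cup B)-\delta(A)-\delta(B))$ if $A\ne B$ and $d_\delta(A,A)=0$. *)

(* Defs.v *)
From HB Require Import structures.
From mathcomp Require Import all_boot all_order all_algebra.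
Set Implicit Arguments. Unset Strict Implicit. Unset Printing Implicit Defensive.
Import Order.TTheory GRing.Theory Num.Theory.
Local Open Scope ring_scope.

Definition is_diversity (R : realFieldType) (Y : finType) (delta : {set Y} -> R) : Prop :=
  (forall A B C : {set Y}, B != set0 ->
     delta (A :|: C) <= delta (A :|: B) + delta (B :|: C)) /\
  (forall A : {set Y}, (#|A| <= 1)%N -> delta A = 0).

(* The distance d_delta on non-empty subsets (defined on all subsets; only its
   values on non-empty subsets are used). *)
Definition d_div (R : realFieldType) (Y : finType) (delta : {set Y} -> R)
  (A B : {set Y}) : R :=
  if A == B then 0 else Num.max 0 (delta (A :|: B) - delta A - delta B).

(* Main.v *)
Require Import Defs.
From HB Require Import structures.
From mathcomp Require Import all_boot all_order all_algebra.
From Stdlib Require Import FunctionalExtensionality.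
Import Order.TTheory GRing.Theory Num.Theory.
Local Open Scope ring_scope.

Lemma key (R : realFieldType) (Y : finType) (delta : {set Y} -> R) (A : {set Y}) (a : Y) :
  is_diversity delta -> a \in A ->
  d_div delta (A :\ a) [set a] = delta A - delta (A :\ a).
Proof.
move=> [D1 D2] aA.
have eU : (A :\ a) :|: [set a] = A by rewrite setUC setD1K.
have d1 : delta [set a] = 0 by apply: D2; rewrite cards1.
rewrite /d_div.
have -> : (A :\ a == [set a]) = false.
  apply/negbTE/negP => /eqP E.
  by move: (set11 a); rewrite -E setD11.
rewrite eU d1 subr0.
apply: max_r.
rewrite subr_ge0.
have := D1 (A :\ a) [set a] set0.
rewrite setU0 setU0 eU d1 addr0; apply.
by apply/set0Pn; exists a; rewrite set11.
Qed.

Theorem mainTheorem14 (R : realFieldType) (Y : finType)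
  (delta1 delta2 : {set Y} -> R) :
  is_diversity delta1 -> is_diversity delta2 ->
  (forall A B : {set Y}, A != set0 -> B != set0 ->
     d_div delta1 A B = d_div delta2 A B) ->
  delta1 = delta2.
Proof.
move=> H1 H2 Hd.
suff S : forall n (A : {set Y}), (#|A| <= n)%N -> delta1 A = delta2 A.
  by apply: functional_extensionality => A; apply: (S #|A|).
elim=> [|n IH] A hA.
  by rewrite (proj2 H1) ?(proj2 H2) // (leq_trans hA).
case: (leqP #|A| 1) => h1.
  by rewrite (proj2 H1) ?(proj2 H2).
have [a aA] : exists a, a \in A.
  by apply/set0Pn; rewrite -card_gt0 (ltn_trans _ h1).
have cA : #|A :\ a| = #|A|.-1 by rewrite (cardsD1 a A) aA.
have ne : A :\ a != set0.
  by rewrite -card_gt0 cA -ltnS prednK // (ltn_trans _ h1).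
have n1 : [set a] != set0 by apply/set0Pn; exists a; rewrite set11.
have e := Hd _ _ ne n1.
rewrite !key // in e.
have ih : delta1 (A :\ a) = delta2 (A :\ a).
  by apply: IH; rewrite cA -ltnS prednK // (ltn_trans _ h1).
by move/(congr1 (fun x => x + delta1 (A :\ a))): e; rewrite ih !subrK.
Qed.
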